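(* In the model with two recommendation thresholds $0<R_1\le R_2<1$, suppose $F$ is symmetric ($F(-i)=1-F(i)$ for all $i$), and let $\sigma=q_H/q_L$. Then the value $V(R_1,R_2)$ of the recommendation system is (i) decreasing in $R_1$ if $\sigma<1$, and (ii) increasing in $R_2$ if $\sigma>1$.
   Context: Setting. Consumer types are $i\in[-1/2,1/2]$, distributed according to a continuous cumulative distribution function $F$ with full support on $[-1/2,1/2]$. A product has a quality vector $(Q_1,Q_2)\in\{0,1\}^2$; a type-$i$ consumer gets payoff $(1/2+i)Q_1+(1/2-i)Q_2$ from it. The versions $(1,1),(1,0),(0,1),(0,0)$ have prior probabilities $q_H,q_1,q_2,q_L$ respectively, all strictly positive and summing to $1$. One product carries a recommendation from a sender whose type is drawn from $F$ independently of the product. Given thresholds $0<R_1\le R_2<1$, the sender gives a buy recommendation $B$ if her payoff from the product is at least $R_2$, a don't-buy recommendation $D$ if it is below $R_1$, and a neutral recommendation $N$ if it lies in $[R_1,R_2)$. For $r\in\{B,N,D\}$, let $\pi^r$ be the probability of recommendation $r$ and $(p_H^r,p_1^r,p_2^r,p_L^r)$ the Bayesian posterior over $(1,1),(1,0),(0,1),(0,0)$ given $r$ (when $\pi^r>0$). Let $U_i^r=p_H^r+(1/2+i)p_1^r+(1/2-i)p_2^r$ and $U_i^0=q_H+(1/2+i)q_1+(1/2-i)q_2$ (expected payoff from an unrecommended alternative). The value of the recommendation system is $V(R_1,R_2)=\sum_{r\in\{B,N,D\}:\,\pi^r>0}\pi^r\int_{-1/2}^{1/2}\max\{U_i^r-U_i^0,0\}\,dF(i)$,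 the expected payoff gain of a receiver drawn from $F$ who, after each recommendation, optimally chooses between the recommended product and an alternative. *)

(* Defs.v *)
From HB Require Import structures.
From mathcomp Require Import all_boot all_order all_algebra.
From mathcomp Require Import all_classical all_reals all_analysis.

Set Implicit Arguments.
Unset Strict Implicit.
Unset Printing Implicit Defensive.

Import Order.TTheory GRing.Theory Num.Def Num.Theory.
Import numFieldNormedType.Exports.

Local Open Scope classical_set_scope.
Local Open Scope ring_scope.

(* Product versions (Q1,Q2): (1,1), (1,0), (0,1), (0,0). *)
Inductive version := vH | v1 | v2 | vL.

(* Recommendations: buy, neutral, don't buy. *)
Inductive recom := rB | rN | rD.

Section Model.
Variable R : realType.

Definition half : R := 2^-1.

Definition Q1 (v : version) : R := match v with vH | v1 => 1 | _ => 0 end.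
Definition Q2 (v : version) : R := match v with vH | v2 => 1 | _ => 0 end.

Definition payoff (i : R) (v : version) : R :=
  (2^-1 + i) * Q1 v + (2^-1 - i) * Q2 v.

Definition prior (qH q1 q2 qL : R) (v : version) : R :=
  match v with vH => qH | v1 => q1 | v2 => q2 | vL => qL end.

Definition recommend (R1 R2 u : R) : recom :=
  if R2 <= u then rB else if u < R1 then rD else rN.

Variable F : cumulative R R.
Let mu := lebesgue_stieltjes_measure F.

Definition prob_rec_given (R1 R2 : R) (v : version) (r : recom) : R :=
  fine (mu [set j | j \in `[- half, half]%R /\ recommend R1 R2 (payoff j v) = r]).

Variables (qH q1 q2 qL : R).

Definition prob_rec (R1 R2 : R) (r : recom) : R :=
  prior qH q1 q2 qL vH * prob_rec_given R1 R2 vH r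
  + prior qH q1 q2 qL v1 * prob_rec_given R1 R2 v1 r
  + prior qH q1 q2 qL v2 * prob_rec_given R1 R2 v2 r
  + prior qH q1 q2 qL vL * prob_rec_given R1 R2 vL r.

(* Bayesian posterior p_v^r (meaningful when pi^r > 0). *)
Definition posterior (R1 R2 : R) (r : recom) (v : version) : R :=
  prior qH q1 q2 qL v * prob_rec_given R1 R2 v r / prob_rec R1 R2 r.

Definition U_rec (R1 R2 : R) (r : recom) (i : R) : R :=
  posterior R1 R2 r vH + (2^-1 + i) * posterior R1 R2 r v1
  + (2^-1 - i) * posterior R1 R2 r v2.

Definition U_alt (i : R) : R := qH + (2^-1 + i) * q1 + (2^-1 - i) * q2.

Definition value_term (R1 R2 : R) (r : recom) : \bar R :=
  if 0 < prob_rec R1 R2 r then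
    ((prob_rec R1 R2 r)%:E *
     \int[mu]_(i in `[(- half)%R, half])
        (Num.max (U_rec R1 R2 r i - U_alt i) 0)%:E)%E
  else 0%E.

Definition value (R1 R2 : R) : \bar R :=
  (value_term R1 R2 rB + value_term R1 R2 rN + value_term R1 R2 rD)%E.

End Model.

Definition type_cdf (R : realType) (F : cumulative R R) : Prop :=
  continuous (F : R -> R) /\
  (forall x : R, x <= - 2^-1 -> F x = 0) /\
  (forall x : R, 2^-1 <= x -> F x = 1) /\
  (forall x y : R, - 2^-1 <= x -> x < y -> y <= 2^-1 -> F x < F y).

(* Main.v *)
Require Import Defs.
From HB Require Import structures.
From mathcomp Require Import all_boot all_order all_algebra.
From mathcomp Require Import all_classical all_reals all_analysis.
From mathcomp Require Import measurable_realfun.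
From mathcomp Require Import ring lra.
Import Order.TTheory GRing.Theory Num.Def Num.Theory.
Import numFieldNormedType.Exports.
Local Open Scope classical_set_scope.
Local Open Scope ring_scope.

Section M.
Variable R : realType.
Variable F : cumulative R R.
Hypothesis Fc : continuous (F : R -> R).
Local Notation mu := (lebesgue_stieltjes_measure F).

Lemma mu_oc (x y : R) : x <= y -> mu `]x, y]%classic = (F y - F x)%:E.
Proof.
move=> xy.
rewrite /mu /lebesgue_stieltjes_measure/= /measure_extension/=.
rewrite measurable_mu_extE//; last exact: is_ocitv.
exact: (wlength_itv_bnd F false false xy).
Qed.

Lemma mu_set1 (x : R) : mu [set x] = 0%E.
Proof.
apply/eqP; rewrite eq_le measure_ge0 andbT.
apply/lee_addgt0Pr => e e0; rewrite add0e.
have : (F : R -> R) x @[x --> x] --> F x by apply: Fc.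
move/cvgrPdist_lt => /(_ e e0) [d /= d0 Hd].
have sub : [set x] `<=` `]x - d / 2, x]%classic.
  move=> y /= ->; rewrite in_itv /= lexx andbT; lra.
apply: (le_trans (@le_measure _ _ _ mu _ _ _ _ sub)); rewrite ?inE//=.
rewrite mu_oc; last lra.
rewrite lee_fin.
have /Hd /= : ball_ normr x d (x - d / 2).
  rewrite /ball_ /= opprB addrC subrK ger0_norm; lra.
move=> h; apply: ltW; apply: le_lt_trans h; exact: ler_norm.
Qed.

Lemma mu_oo (a b : R) : a <= b -> mu `]a, b[%classic = (F b - F a)%:E.
Proof.
move=> ab; have [ab'|ba] := ltP a b; last first.
  have -> : a = b by apply/eqP; rewrite eq_le ab ba.
  by rewrite set_itv_ge ?measure0 ?subrr// bnd_simp ltxx.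
have := @mu_oc a b ab.
rewrite -(setUitv1 true)// ?bnd_simp// measureU//.
- by rewrite (_ : (_ [set b] = 0)%E) ?adde0// ; exact: mu_set1.
- by apply/seteqP; split => // x [/= + xb]; rewrite in_itv/= xb ltxx andbF.
Qed.

Lemma mu_cc (a b : R) : a <= b -> mu `[a, b]%classic = (F b - F a)%:E.
Proof.
move=> ab; have := @mu_oc a b ab.
rewrite -(setU1itv false)// ?bnd_simp// measureU//.
- by rewrite (_ : (_ [set a] = 0)%E) ?add0e// ; exact: mu_set1.
- by apply/seteqP; split => // x [/= ->]; rewrite in_itv/= ltxx.
Qed.

Lemma mu_co (a b : R) : a <= b -> mu `[a, b[%classic = (F b - F a)%:E.
Proof.
move=> ab; have [ab'|ba] := ltP a b; last first.
  have -> : a = b by apply/eqP; rewrite eq_le ab ba.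
  by rewrite set_itv_ge ?measure0 ?subrr// bnd_simp ltxx.
have := @mu_oo a b ab.
rewrite -(setU1itv false)// ?bnd_simp// measureU//.
- by rewrite (_ : (_ [set a] = 0)%E) ?add0e// ; exact: mu_set1.
- by apply/seteqP; split => // x [/= ->]; rewrite in_itv/= ltxx.
Qed.
End M.

Section P.
Variable R : realType.
Variable F : cumulative R R.
Local Notation mu := (lebesgue_stieltjes_measure F).

Lemma payH j : payoff j vH = 1 :> R.
Proof. rewrite /payoff /=; lra. Qed.
Lemma payL j : payoff j vL = 0 :> R.
Proof. rewrite /payoff /=; lra. Qed.
Lemma pay1 j : payoff j v1 = 2^-1 + j :> R.
Proof. rewrite /payoff /=; lra. Qed.
Lemma pay2 j : payoff j v2 = 2^-1 - j :> R.
Proof. rewrite /payoff /=; lra. Qed.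

Ltac ivl := rewrite ?in_itv /=; (try (apply/andP; split)); lra.
Ltac rcase R1 R2 := (case: (leP R2 _) => H1; [|case: (ltP _ R1) => H2]).
Ltac setsolve R1 R2 :=
  rewrite /recommend; apply/seteqP; split => j /=; rewrite ?in_itv /=;
  [ move=> [/andP[h1 h2] +]; rcase R1 R2;
    ((let E := fresh in intro E; discriminate E) || intros _); ivl
  | (move/andP => [h1 h2] || move=> h1);
    split; [ivl|]; rcase R1 R2; (reflexivity || (exfalso; lra)) ].

Ltac setsolve0 R1 R2 :=
  rewrite /recommend; apply/seteqP; split => j //=; rewrite ?in_itv /=;
  move=> [/andP[h1 h2] +]; rcase R1 R2;
    ((let E := fresh in intro E; discriminate E) || (intros _; exfalso; lra)).

Hypothesis tc : type_cdf F.

Let Fc : continuous (F : R -> R). Proof. by case: tc. Qed.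

Lemma fcc a b : a <= b -> fine (mu `[a, b]%classic) = F b - F a.
Proof. by move=> ab; rewrite mu_cc. Qed.
Lemma fco a b : a <= b -> fine (mu `[a, b[%classic) = F b - F a.
Proof. by move=> ab; rewrite mu_co. Qed.
Lemma foc a b : a <= b -> fine (mu `]a, b]%classic) = F b - F a.
Proof. by move=> ab; rewrite mu_oc. Qed.

Let Fm (x : R) : x <= - 2^-1 -> F x = 0. Proof. case: tc => _ [h _]; exact: h. Qed.
Let Fp (x : R) : 2^-1 <= x -> F x = 1. Proof. case: tc => _ [_ [h _]]; exact: h. Qed.

Section Vals.
Variables R1 R2 : R.
Hypothesis R10 : 0 < R1.
Hypothesis R12 : R1 <= R2.
Hypothesis R21 : R2 < 1.
Hypothesis Fs : forall i : R, F (- i) = 1 - F i.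

Lemma PHB : prob_rec_given F R1 R2 vH rB = 1.
Proof.
move: R10 R12 R21 => R10' R12' R21'.
rewrite /prob_rec_given /Defs.half.
under eq_set do rewrite payH.
have -> : [set j : R | j \in `[- 2^-1, 2^-1] /\ recommend R1 R2 1 = rB]
  = `[- 2^-1, 2^-1]%classic by setsolve R1 R2.
rewrite fcc; last lra. rewrite (@Fm (-2^-1)) ?(@Fp (2^-1)); lra.
Qed.

Lemma PHN : prob_rec_given F R1 R2 vH rN = 0.
Proof.
move: R10 R12 R21 => R10' R12' R21'.
rewrite /prob_rec_given /Defs.half.
under eq_set do rewrite payH.
have -> : [set j : R | j \in `[- 2^-1, 2^-1] /\ recommend R1 R2 1 = rN]
  = set0 by setsolve0 R1 R2.
by rewrite measure0.
Qed.

Lemma PHD : prob_rec_given F R1 R2 vH rD = 0.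
Proof.
move: R10 R12 R21 => R10' R12' R21'.
rewrite /prob_rec_given /Defs.half.
under eq_set do rewrite payH.
have -> : [set j : R | j \in `[- 2^-1, 2^-1] /\ recommend R1 R2 1 = rD]
  = set0 by setsolve0 R1 R2.
by rewrite measure0.
Qed.

Lemma PLB : prob_rec_given F R1 R2 vL rB = 0.
Proof.
move: R10 R12 R21 => R10' R12' R21'.
rewrite /prob_rec_given /Defs.half.
under eq_set do rewrite payL.
have -> : [set j : R | j \in `[- 2^-1, 2^-1] /\ recommend R1 R2 0 = rB]
  = set0 by setsolve0 R1 R2.
by rewrite measure0.
Qed.

Lemma PLN : prob_rec_given F R1 R2 vL rN = 0.
Proof.
move: R10 R12 R21 => R10' R12' R21'.
rewrite /prob_rec_given /Defs.half.
under eq_set do rewrite payL.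
have -> : [set j : R | j \in `[- 2^-1, 2^-1] /\ recommend R1 R2 0 = rN]
  = set0 by setsolve0 R1 R2.
by rewrite measure0.
Qed.

Lemma PLD : prob_rec_given F R1 R2 vL rD = 1.
Proof.
move: R10 R12 R21 => R10' R12' R21'.
rewrite /prob_rec_given /Defs.half.
under eq_set do rewrite payL.
have -> : [set j : R | j \in `[- 2^-1, 2^-1] /\ recommend R1 R2 0 = rD]
  = `[- 2^-1, 2^-1]%classic by setsolve R1 R2.
rewrite fcc; last lra. rewrite (@Fm (-2^-1)) ?(@Fp (2^-1)); lra.
Qed.

Lemma P1B : prob_rec_given F R1 R2 v1 rB = 1 - F (R2 - 2^-1).
Proof.
move: R10 R12 R21 => R10' R12' R21'.
rewrite /prob_rec_given /Defs.half.
under eq_set do rewrite pay1.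
have -> : [set j : R | j \in `[- 2^-1, 2^-1] /\ recommend R1 R2 (2^-1 + j) = rB]
  = `[R2 - 2^-1, 2^-1]%classic by setsolve R1 R2.
rewrite fcc; last lra. rewrite (@Fp (2^-1)); lra.
Qed.

Lemma P2B : prob_rec_given F R1 R2 v2 rB = 1 - F (R2 - 2^-1).
Proof.
move: R10 R12 R21 => R10' R12' R21'.
rewrite /prob_rec_given /Defs.half.
under eq_set do rewrite pay2.
have -> : [set j : R | j \in `[- 2^-1, 2^-1] /\ recommend R1 R2 (2^-1 - j) = rB]
  = `[- 2^-1, 2^-1 - R2]%classic by setsolve R1 R2.
rewrite fcc; last lra. rewrite (@Fm (-2^-1)); last lra.
have -> : 2^-1 - R2 = - (R2 - 2^-1) by lra.
rewrite Fs; lra.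
Qed.

Lemma P1N : prob_rec_given F R1 R2 v1 rN = F (R2 - 2^-1) - F (R1 - 2^-1).
Proof.
move: R10 R12 R21 => R10' R12' R21'.
rewrite /prob_rec_given /Defs.half.
under eq_set do rewrite pay1.
have -> : [set j : R | j \in `[- 2^-1, 2^-1] /\ recommend R1 R2 (2^-1 + j) = rN]
  = `[R1 - 2^-1, R2 - 2^-1[%classic by setsolve R1 R2.
rewrite fco; lra.
Qed.

Lemma P2N : prob_rec_given F R1 R2 v2 rN = F (R2 - 2^-1) - F (R1 - 2^-1).
Proof.
move: R10 R12 R21 => R10' R12' R21'.
rewrite /prob_rec_given /Defs.half.
under eq_set do rewrite pay2.
have -> : [set j : R | j \in `[- 2^-1, 2^-1] /\ recommend R1 R2 (2^-1 - j) = rN]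
  = `]2^-1 - R2, 2^-1 - R1]%classic by setsolve R1 R2.
rewrite foc; last lra.
have -> : 2^-1 - R2 = - (R2 - 2^-1) by lra.
have -> : 2^-1 - R1 = - (R1 - 2^-1) by lra.
rewrite !Fs; lra.
Qed.

Lemma P1D : prob_rec_given F R1 R2 v1 rD = F (R1 - 2^-1).
Proof.
move: R10 R12 R21 => R10' R12' R21'.
rewrite /prob_rec_given /Defs.half.
under eq_set do rewrite pay1.
have -> : [set j : R | j \in `[- 2^-1, 2^-1] /\ recommend R1 R2 (2^-1 + j) = rD]
  = `[- 2^-1, R1 - 2^-1[%classic by setsolve R1 R2.
rewrite fco; last lra. rewrite (@Fm (-2^-1)); lra.
Qed.

Lemma P2D : prob_rec_given F R1 R2 v2 rD = F (R1 - 2^-1).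
Proof.
move: R10 R12 R21 => R10' R12' R21'.
rewrite /prob_rec_given /Defs.half.
under eq_set do rewrite pay2.
have -> : [set j : R | j \in `[- 2^-1, 2^-1] /\ recommend R1 R2 (2^-1 - j) = rD]
  = `]2^-1 - R1, 2^-1]%classic by setsolve R1 R2.
rewrite foc; last lra. rewrite (@Fp (2^-1)); last lra.
have -> : 2^-1 - R1 = - (R1 - 2^-1) by lra.
rewrite !Fs; lra.
Qed.
End Vals.
End P.

Section VTs.
Variable R : realType.
Variable F : cumulative R R.
Local Notation mu := (lebesgue_stieltjes_measure F).
Variables qH q1 q2 qL : R.

Definition Aint (R1 R2 : R) (r : recom) (i : R) : R :=
  qH * prob_rec_given F R1 R2 vH r * (payoff i vH - U_alt qH q1 q2 i)
  + q1 * prob_rec_given F R1 R2 v1 r * (payoff i v1 - U_alt qH q1 q2 i)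
  + q2 * prob_rec_given F R1 R2 v2 r * (payoff i v2 - U_alt qH q1 q2 i)
  + qL * prob_rec_given F R1 R2 vL r * (payoff i vL - U_alt qH q1 q2 i).

Lemma measaff (g : R -> R) (D : set (measurableTypeR R)) :
  (forall i, g i = g 0 + (g 1 - g 0) * i) ->
  measurable_fun D (fun i : measurableTypeR R => (Num.max (g i) 0)%:E).
Proof.
move=> gE; apply/measurable_EFinP.
have -> : (fun i => Num.max (g i) 0) = (fun i => Num.max (g 0 + (g 1 - g 0) * i) 0).
  by apply/funext => i; rewrite -gE.
apply: measurable_maxr; last exact: measurable_cst.
apply: measurable_funD; first exact: measurable_cst.
apply: measurable_funM; first exact: measurable_cst.
exact: measurable_id.
Qed.

Lemma Aint_aff R1 R2 r i : Aint R1 R2 r i = Aint R1 R2 r 0 + (Aint R1 R2 r 1 - Aint R1 R2 r 0) * i.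
Proof. rewrite /Aint /payoff /U_alt /=; ring. Qed.

Lemma P_ge0 R1 R2 v r : 0 <= prob_rec_given F R1 R2 v r.
Proof. by rewrite /prob_rec_given fine_ge0 // measure_ge0. Qed.

Lemma alg (PH P1 P2 PL i U : R) :
  qH*PH + q1*P1 + q2*P2 + qL*PL != 0 ->
  (qH*PH + q1*P1 + q2*P2 + qL*PL) *
  (qH*PH/(qH*PH + q1*P1 + q2*P2 + qL*PL)
   + (2^-1+i)*(q1*P1/(qH*PH + q1*P1 + q2*P2 + qL*PL))
   + (2^-1-i)*(q2*P2/(qH*PH + q1*P1 + q2*P2 + qL*PL)) - U)
  = qH*PH*(payoff i vH - U) + q1*P1*(payoff i v1 - U) + q2*P2*(payoff i v2 - U)
    + qL*PL*(payoff i vL - U).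
Proof. move=> hp; rewrite /payoff /=; field; exact: hp. Qed.

Lemma VT R1 R2 r : 0 < qH -> 0 < q1 -> 0 < q2 -> 0 < qL ->
  value_term F qH q1 q2 qL R1 R2 r =
  (\int[mu]_(i in `[(- 2^-1)%R, (2^-1)%R]) (Num.max (Aint R1 R2 r i) 0)%:E)%E.
Proof.
move=> hH h1 h2 hL.
rewrite /value_term /Defs.half.
case: ifPn => hpos.
  rewrite -ge0_integralZl_EFin //; last exact: ltW.
  - apply: eq_integral => i _; rewrite -EFinM maxr_pMr ?ltW // mulr0.
    congr (EFin (Num.max _ 0)).
    rewrite /U_rec /posterior /Aint.
    move: hpos; rewrite /prob_rec /prior => hpos.
    by apply: alg; rewrite gt_eqF.
  - by move=> i _; rewrite lee_fin le_max lexx orbT.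
  - apply: measaff => i; rewrite /U_rec /posterior /U_alt /=; ring.
move: hpos; rewrite -leNgt /prob_rec /prior => hle.
have gH := mulr_ge0 (ltW hH) (P_ge0 R1 R2 vH r).
have g1 := mulr_ge0 (ltW h1) (P_ge0 R1 R2 v1 r).
have g2 := mulr_ge0 (ltW h2) (P_ge0 R1 R2 v2 r).
have gL := mulr_ge0 (ltW hL) (P_ge0 R1 R2 vL r).
have eH : qH * prob_rec_given F R1 R2 vH r = 0 by lra.
have e1 : q1 * prob_rec_given F R1 R2 v1 r = 0 by lra.
have e2 : q2 * prob_rec_given F R1 R2 v2 r = 0 by lra.
have eL : qL * prob_rec_given F R1 R2 vL r = 0 by lra.
rewrite (eq_integral (cst 0%E)) ?integral0 // => i _.
by rewrite /Aint eH e1 e2 eL !mul0r !addr0 maxxx.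
Qed.
End VTs.

Section Ints.
Variable R : realType.
Variable F : cumulative R R.
Local Notation mu := (lebesgue_stieltjes_measure F).
Local Notation D := (`[(- 2^-1)%R, (2^-1)%R]%classic : set (measurableTypeR R)).

Lemma int_fin (g : R -> R) : type_cdf F ->
  (forall i, g i = g 0 + (g 1 - g 0) * i) ->
  (\int[mu]_(i in D) (Num.max (g i) 0)%:E)%E \is a fin_num.
Proof.
move=> [Fc _] gE.
rewrite ge0_fin_numE; last by apply: integral_ge0 => i _; rewrite lee_fin le_max lexx orbT.
set M := `|g 0| + `|g 1 - g 0|.
apply: (@le_lt_trans _ _ (\int[mu]_(i in D) (cst M%:E) i)%E).
  apply: ge0_le_integral => //.
  - by move=> i _; rewrite lee_fin le_max lexx orbT.
  - exact: measaff.
  - move=> i; rewrite /= in_itv /= => /andP[hi1 hi2].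
    rewrite /= lee_fin ge_max; apply/andP; split; last by rewrite /M addr_ge0.
    rewrite /M (gE i).
    have hi : `|i| <= 1 by rewrite ler_norml; apply/andP; split; lra.
    have : `|(g 1 - g 0) * i| <= `|g 1 - g 0|.
      by rewrite normrM ler_piMr.
    have := ler_norm (g 0); have := ler_norm ((g 1 - g 0) * i).
    lra.
rewrite integral_cst //= mu_cc //; last lra.
by rewrite -EFinM ltry.
Qed.

Lemma int_pos (g : R -> R) : type_cdf F ->
  (forall i, g i = g 0 + (g 1 - g 0) * i) -> 0 < g 0 ->
  (0 < \int[mu]_(i in D) (Num.max (g i) 0)%:E)%E.
Proof.
move=> [Fc [_ [_ Fst]]] gE g0.
set b := `|g 1 - g 0| + 1.
have b0 : 0 < b by rewrite /b; have := normr_ge0 (g 1 - g 0); lra.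
set e := Num.min (2^-1) (g 0 / (2 * b)).
have e0 : 0 < e by rewrite /e lt_min; apply/andP; split; [lra| apply: divr_gt0; lra].
have e1 : e <= 2^-1 by rewrite /e ge_min lexx.
have e2 : e <= g 0 / (2 * b) by rewrite /e ge_min lexx orbT.
clearbody e.
have hb : `|g 1 - g 0| <= b by rewrite /b; lra.
clearbody b.
set E := (`[- e, e]%classic : set (measurableTypeR R)).
have mE : measurable E by exact: measurable_itv.
have sub : E `<=` D.
  by move=> x; rewrite /E /= !in_itv /= => /andP[h1 h2]; apply/andP; split; lra.
apply: (@lt_le_trans _ _ (\int[mu]_(i in E) (Num.max (g i) 0)%:E)%E); last first.
  apply: ge0_subset_integral => //; first exact: measaff.
  by move=> i _; rewrite lee_fin le_max lexx orbT.
apply: (@lt_le_trans _ _ (\int[mu]_(i in E) (cst (g 0 / 2)%:E) i)%E).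
  rewrite integral_cst //= mu_cc //; last lra.
  rewrite -EFinM lte_fin; apply: mulr_gt0; first lra.
  rewrite subr_gt0; apply: Fst; lra.
apply: ge0_le_integral => //.
- by move=> i _; rewrite /= lee_fin; lra.
- exact: measaff.
- move=> i; rewrite /E /= in_itv /= => /andP[hi1 hi2].
  rewrite /= lee_fin le_max; apply/orP; left; rewrite (gE i).
  have hi : `|i| <= g 0 / (2 * b) by rewrite ler_norml; apply/andP; split; lra.
  have : `|(g 1 - g 0) * i| <= b * (g 0 / (2 * b)).
    by rewrite normrM; apply: ler_pM => //; exact: normr_ge0.
  have -> : b * (g 0 / (2 * b)) = g 0 / 2 by field; lra.
  have := ler_norm (- ((g 1 - g 0) * i)); rewrite normrN.
  lra.
Qed.
End Ints.

Set Implicit Arguments.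
Unset Strict Implicit.
Section Main.
Variable R : realType.
Variable F : cumulative R R.
Local Notation mu := (lebesgue_stieltjes_measure F).
Local Notation D := (`[(- 2^-1)%R, (2^-1)%R]%classic : set (measurableTypeR R)).
Variables qH q1 q2 qL : R.

Definition gf (i : R) : R :=
  q1 * (2^-1 + i - U_alt qH q1 q2 i) + q2 * (2^-1 - i - U_alt qH q1 q2 i).

Lemma gf_aff i : gf i = gf 0 + (gf 1 - gf 0) * i.
Proof. rewrite /gf /U_alt; ring. Qed.

Section A.
Hypothesis tc : type_cdf F.
Hypothesis Fs : forall i : R, F (- i) = 1 - F i.
Variables R1 R2 : R.
Hypothesis h10 : 0 < R1.
Hypothesis h12 : R1 <= R2.
Hypothesis h2 : R2 < 1.

Lemma AintB i : Aint R F qH q1 q2 qL R1 R2 rB i =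
  qH * (1 - U_alt qH q1 q2 i) + (1 - F (R2 - 2^-1)) * gf i.
Proof.
rewrite /Aint (@PHB R F tc R1 R2 h10 h12 h2) (@P1B R F tc R1 R2 h10 h12 h2) (@P2B R F tc R1 R2 h10 h12 h2 Fs)
  (@PLB R F R1 R2 h10 h12 h2) /gf /payoff /=; by field.
Qed.

Lemma AintN i : Aint R F qH q1 q2 qL R1 R2 rN i =
  (F (R2 - 2^-1) - F (R1 - 2^-1)) * gf i.
Proof.
rewrite /Aint (@PHN R F R1 R2 h10 h12 h2) (@P1N R F tc R1 R2 h10 h12 h2) (@P2N R F R1 R2 h10 h12 h2 Fs)
  (@PLN R F R1 R2 h10 h12 h2) /gf /payoff /=; by field.
Qed.

Lemma AintD i : Aint R F qH q1 q2 qL R1 R2 rD i =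
  F (R1 - 2^-1) * gf i - qL * U_alt qH q1 q2 i.
Proof.
rewrite /Aint (@PHD R F R1 R2 h10 h12 h2) (@P1D R F tc R1 R2 h10 h12 h2) (@P2D R F tc R1 R2 h10 h12 h2 Fs)
  (@PLD R F tc R1 R2 h10 h12 h2) /gf /payoff /=; by field.
Qed.
End A.

Lemma Dneg (a i : R) : 0 < qH -> 0 < q1 -> 0 < q2 -> 0 < qL ->
  qH + q1 + q2 + qL = 1 -> 0 <= a <= 1 -> - 2^-1 <= i <= 2^-1 ->
  a * gf i - qL * U_alt qH q1 q2 i <= 0.
Proof.
move=> hH h1 h2 hL hs /andP[a0 a1] /andP[i1 i2].
rewrite /gf /U_alt.
set w := q1 * (2^-1 + i) + q2 * (2^-1 - i).
have w0 : 0 <= w by rewrite /w; nra.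
have w1 : w <= q1 + q2 by rewrite /w; nra.
set U := qH + (2^-1 + i) * q1 + (2^-1 - i) * q2.
have UE : U = qH + w by rewrite /U /w; ring.
have gE : q1 * (2^-1 + i - U) + q2 * (2^-1 - i - U) = w - (q1 + q2) * U.
  by rewrite /w; ring.
rewrite gE UE.
have key : w - (q1 + q2) * (qH + w) - qL * (qH + w) = qH * (w - (1 - qH)).
  have -> : qL = 1 - qH - q1 - q2 by lra.
  ring.
have hneg : qH * (w - (1 - qH)) < 0 by rewrite pmulr_rlt0 //; lra.
have hU : 0 <= qL * (qH + w) by apply: mulr_ge0; lra.
set G := w - (q1 + q2) * (qH + w).
have key' : G - qL * (qH + w) = qH * (w - (1 - qH)) by rewrite /G -key.
clearbody G U w.
case: (lerP G 0) => hG.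
  have : a * G <= 0 by rewrite mulr_ge0_le0.
  lra.
have : a * G <= G by rewrite ler_piMl // ltW.
lra.
Qed.

Lemma Bpos (b i : R) : 0 < qH -> 0 < q1 -> 0 < q2 -> 0 < qL ->
  qH + q1 + q2 + qL = 1 -> 0 <= b <= 1 -> - 2^-1 <= i <= 2^-1 ->
  0 < qH * (1 - U_alt qH q1 q2 i) + b * gf i.
Proof.
move=> hH h1 h2 hL hs /andP[b0 b1] /andP[i1 i2].
rewrite /gf /U_alt.
set w := q1 * (2^-1 + i) + q2 * (2^-1 - i).
have w0 : 0 <= w by rewrite /w; nra.
have w1 : w <= q1 + q2 by rewrite /w; nra.
have -> : qH * (1 - (qH + (2^-1 + i) * q1 + (2^-1 - i) * q2)) +
   b * (q1 * (2^-1 + i - (qH + (2^-1 + i) * q1 + (2^-1 - i) * q2)) +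
        q2 * (2^-1 - i - (qH + (2^-1 + i) * q1 + (2^-1 - i) * q2)))
  = (1 - b) * (qH * (1 - (qH + w))) + b * ((1 - qH - q1 - q2) * (qH + w)).
  by rewrite /w; ring.
have X0 : 0 < qH * (1 - (qH + w)) by apply: mulr_gt0; lra.
have Y0 : 0 < (1 - qH - q1 - q2) * (qH + w) by apply: mulr_gt0; lra.
clearbody w.
case: (lerP b (2^-1)) => hb.
  have : 2^-1 * (qH * (1 - (qH + w))) <= (1 - b) * (qH * (1 - (qH + w))).
    by apply: ler_wpM2r; lra.
  have : 0 <= b * ((1 - qH - q1 - q2) * (qH + w)) by apply: mulr_ge0; lra.
  lra.
have : 2^-1 * ((1 - qH - q1 - q2) * (qH + w)) <= b * ((1 - qH - q1 - q2) * (qH + w)).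
  by apply: ler_wpM2r; lra.
have : 0 <= (1 - b) * (qH * (1 - (qH + w))) by apply: mulr_ge0; lra.
lra.
Qed.

Lemma intZ (k : R) (g : R -> R) : 0 <= k ->
  (forall i, g i = g 0 + (g 1 - g 0) * i) ->
  (\int[mu]_(i in D) (Num.max (k * g i) 0)%:E =
   k%:E * \int[mu]_(i in D) (Num.max (g i) 0)%:E)%E.
Proof.
move=> k0 gE.
rewrite -ge0_integralZl_EFin //.
- by apply: eq_integral => i _; rewrite -EFinM maxr_pMr // mulr0.
- by move=> i _; rewrite lee_fin le_max lexx orbT.
- exact: measaff.
Qed.

Lemma intD (g1 g2 : R -> R) :
  (forall i, g1 i = g1 0 + (g1 1 - g1 0) * i) ->
  (forall i, g2 i = g2 0 + (g2 1 - g2 0) * i) ->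
  (\int[mu]_(i in D) (Num.max (g1 i) 0)%:E + \int[mu]_(i in D) (Num.max (g2 i) 0)%:E =
   \int[mu]_(i in D) (Num.max (g1 i) 0 + Num.max (g2 i) 0)%:E)%E.
Proof.
move=> e1 e2.
rewrite -ge0_integralD //.
- by move=> i _; rewrite lee_fin le_max lexx orbT.
- exact: measaff.
- by move=> i _; rewrite lee_fin le_max lexx orbT.
- exact: measaff.
Qed.

End Main.

Lemma F01 (R : realType) (F : cumulative R R) : type_cdf F -> forall x, 0 <= F x <= 1.
Proof.
move=> [_ [F0 [F1 _]]] x; apply/andP; split.
  rewrite -(F0 (Num.min x (- 2^-1))); last by rewrite ge_min lexx orbT.
  by apply: cumulative_is_nondecreasing; rewrite ge_min lexx.
rewrite -(F1 (Num.max x (2^-1))); last by rewrite le_max lexx orbT.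
by apply: cumulative_is_nondecreasing; rewrite le_max lexx.
Qed.

Theorem proposition10 (R : realType) (F : cumulative R R)
  (qH q1 q2 qL : R) :
  type_cdf F ->
  (forall i : R, F (- i) = 1 - F i) ->
  0 < qH -> 0 < q1 -> 0 < q2 -> 0 < qL -> qH + q1 + q2 + qL = 1 ->
  (qH / qL < 1 ->
     forall R1 R1' R2 : R, 0 < R1 -> R1 < R1' -> R1' <= R2 -> R2 < 1 ->
       (value F qH q1 q2 qL R1' R2 < value F qH q1 q2 qL R1 R2)%E) /\
  (1 < qH / qL ->
     forall R1 R2 R2' : R, 0 < R1 -> R1 <= R2 -> R2 < R2' -> R2' < 1 ->
       (value F qH q1 q2 qL R1 R2 < value F qH q1 q2 qL R1 R2')%E).
Proof.
move=> tc Fs hH h1 h2 hL hs.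
have Fst : forall x y : R, - 2^-1 <= x -> x < y -> y <= 2^-1 -> F x < F y.
  by case: tc => _ [_ [_ ?]].
have Fmon : forall x y : R, x <= y -> F x <= F y.
  by move=> x y xy; apply: cumulative_is_nondecreasing.
have F01' := F01 tc.
have D0 : forall R1 R2 : R, 0 < R1 -> R1 <= R2 -> R2 < 1 ->
  (\int[lebesgue_stieltjes_measure F]_(i in `[(- 2^-1)%R, (2^-1)%R])
     (Num.max (Aint R F qH q1 q2 qL R1 R2 rD i) 0)%:E)%E = 0%E.
  move=> a b a0 ab b1.
  rewrite (eq_integral (cst 0%E)) ?integral0 // => i; rewrite inE /= in_itv /= => hi.
  rewrite (AintD _ _ _ _ tc Fs a0 ab b1); congr EFin; apply/max_idPr.
  by apply: Dneg => //; apply: F01'.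
have NT : forall R1 R2 : R, 0 < R1 -> R1 <= R2 -> R2 < 1 ->
  (\int[lebesgue_stieltjes_measure F]_(i in `[(- 2^-1)%R, (2^-1)%R])
     (Num.max (Aint R F qH q1 q2 qL R1 R2 rN i) 0)%:E)%E =
  ((F (R2 - 2^-1) - F (R1 - 2^-1))%:E *
   \int[lebesgue_stieltjes_measure F]_(i in `[(- 2^-1)%R, (2^-1)%R])
     (Num.max (gf qH q1 q2 i) 0)%:E)%E.
  move=> a b a0 ab b1.
  rewrite -(intZ F); last exact: gf_aff.
    by apply: eq_integral => i _; rewrite (AintN _ _ _ _ tc Fs a0 ab b1).
  by rewrite subr_ge0; apply: Fmon; lra.
have fG := @int_fin R F _ tc (@gf_aff R qH q1 q2).
split.
- move=> sig R1 R1' R2 h10 h11 h12 h2'.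
  have qHL : qH < qL by move: sig; rewrite ltr_pdivrMr // mul1r.
  have h10' : 0 < R1' by lra.
  have h12' : R1 <= R2 by lra.
  rewrite /value !VT //.
  have eB : Aint R F qH q1 q2 qL R1' R2 rB = Aint R F qH q1 q2 qL R1 R2 rB.
    by apply/funext => i; rewrite (AintB _ _ _ _ tc Fs h10' h12 h2') (AintB _ _ _ _ tc Fs h10 h12' h2').
  rewrite eB (D0 R1 R2 h10 h12' h2') (D0 R1' R2 h10' h12 h2') (NT R1 R2 h10 h12' h2') (NT R1' R2 h10' h12 h2') !adde0.
  have fB := @int_fin R F _ tc (@Aint_aff R F qH q1 q2 qL R1 R2 rB).
  have pG : (0 < \int[lebesgue_stieltjes_measure F]_(i in `[(- 2^-1)%R, (2^-1)%R])
     (Num.max (gf qH q1 q2 i) 0)%:E)%E.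
    apply: (@int_pos R F) => //; first exact: gf_aff.
    rewrite /gf /U_alt.
    have -> : q1 * (2^-1 + 0 - (qH + (2^-1 + 0) * q1 + (2^-1 - 0) * q2)) +
      q2 * (2^-1 - 0 - (qH + (2^-1 + 0) * q1 + (2^-1 - 0) * q2)) =
      (q1 + q2) * (2^-1 * ((1 - qH - q1 - q2) - qH)) by field.
    apply: mulr_gt0; lra.
  set TB := (\int[lebesgue_stieltjes_measure F]_(i in `[(- 2^-1)%R, (2^-1)%R])
     (Num.max (Aint R F qH q1 q2 qL R1 R2 rB i) 0)%:E)%E in fB *.
  set G := (\int[lebesgue_stieltjes_measure F]_(i in `[(- 2^-1)%R, (2^-1)%R])
     (Num.max (gf qH q1 q2 i) 0)%:E)%E in fG pG *.
  clearbody TB G.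
  move: fB fG pG; case: TB => [t||] //; case: G => [g||] // _ _.
  rewrite lte_fin => pG. rewrite -EFinM -EFinM -EFinD -EFinD lte_fin.
  rewrite ltrD2l ltr_pM2r // ltrD2l ltrN2.
  apply: Fst; lra.
- move=> sig R1 R2 R2' h10 h12 h22 h2'.
  have qHL : qL < qH by move: sig; rewrite ltr_pdivlMr // mul1r.
  have h12' : R1 <= R2' by lra.
  have h2'' : R2 < 1 by lra.
  rewrite /value !VT //.
  rewrite (D0 R1 R2 h10 h12 h2'') (D0 R1 R2' h10 h12' h2') (NT R1 R2 h10 h12 h2'')
    (NT R1 R2' h10 h12' h2') !adde0.
  have [k kE] : exists k, k = F (R2' - 2^-1) - F (R2 - 2^-1) by eexists.
  have k0 : 0 < k by rewrite kE subr_gt0; apply: Fst; lra.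
  have gNaff : forall i, (fun i => - gf qH q1 q2 i) i =
     (fun i => - gf qH q1 q2 i) 0 + ((fun i => - gf qH q1 q2 i) 1 - (fun i => - gf qH q1 q2 i) 0) * i.
    by move=> i /=; rewrite /gf /U_alt; ring.
  have E1 : (\int[lebesgue_stieltjes_measure F]_(i in `[(- 2^-1)%R, (2^-1)%R])
       (Num.max (Aint R F qH q1 q2 qL R1 R2 rB i) 0)%:E +
     k%:E * \int[lebesgue_stieltjes_measure F]_(i in `[(- 2^-1)%R, (2^-1)%R])
       (Num.max (- gf qH q1 q2 i) 0)%:E =
     \int[lebesgue_stieltjes_measure F]_(i in `[(- 2^-1)%R, (2^-1)%R])
       (Num.max (Aint R F qH q1 q2 qL R1 R2' rB i) 0)%:E +
     k%:E * \int[lebesgue_stieltjes_measure F]_(i in `[(- 2^-1)%R, (2^-1)%R])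
       (Num.max (gf qH q1 q2 i) 0)%:E)%E.
    rewrite -(intZ F (g := fun i => - gf qH q1 q2 i)) ?(ltW k0) //.
    rewrite -(intZ F (g := gf qH q1 q2)) ?(ltW k0) //; last exact: gf_aff.
    rewrite intD; [| exact: Aint_aff | by move=> i; rewrite /gf /U_alt; ring].
    rewrite intD; [| exact: Aint_aff | by move=> i; rewrite /gf /U_alt; ring].
    apply: eq_integral => i; rewrite inE /= in_itv /= => hi; congr EFin.
    rewrite (AintB _ _ _ _ tc Fs h10 h12 h2'') (AintB _ _ _ _ tc Fs h10 h12' h2').
    have : 0 <= 1 - F (R2 - 2^-1) <= 1.
      by case/andP: (F01' (R2 - 2^-1)) => ? ?; apply/andP; split; lra.
    move=> hb; rewrite max_l; last by apply: ltW; apply: (Bpos (qL := qL)).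
    have : 0 <= 1 - F (R2' - 2^-1) <= 1.
      by case/andP: (F01' (R2' - 2^-1)) => ? ?; apply/andP; split; lra.
    move=> hb2; rewrite [in RHS]max_l; last by apply: ltW; apply: (Bpos (qL := qL)).
    move: k0; rewrite kE; move: (gf qH q1 q2 i) => g k0.
    case: (lerP 0 g) => hg.
      rewrite (max_r (x := _ * - g)); last by rewrite mulrN oppr_le0 mulr_ge0 // ltW.
      rewrite max_l; last by rewrite mulr_ge0 // ltW.
      ring.
    rewrite max_l; last by rewrite mulrN oppr_ge0; apply: mulr_ge0_le0; apply: ltW.
    rewrite max_r; last by apply: mulr_ge0_le0; apply: ltW.
    ring.
  have fB := @int_fin R F _ tc (@Aint_aff R F qH q1 q2 qL R1 R2 rB).
  have fB' := @int_fin R F _ tc (@Aint_aff R F qH q1 q2 qL R1 R2' rB).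
  have fGm := @int_fin R F _ tc gNaff.
  have pGm : (0 < \int[lebesgue_stieltjes_measure F]_(i in `[(- 2^-1)%R, (2^-1)%R])
     (Num.max (- gf qH q1 q2 i) 0)%:E)%E.
    apply: (@int_pos R F) => //=.
    rewrite /gf /U_alt.
    have -> : - (q1 * (2^-1 + 0 - (qH + (2^-1 + 0) * q1 + (2^-1 - 0) * q2)) +
      q2 * (2^-1 - 0 - (qH + (2^-1 + 0) * q1 + (2^-1 - 0) * q2))) =
      (q1 + q2) * (2^-1 * (qH - (1 - qH - q1 - q2))) by field.
    apply: mulr_gt0; lra.
  move: E1 fB fB' fG fGm pGm.
  set TB := (\int[lebesgue_stieltjes_measure F]_(i in `[(- 2^-1)%R, (2^-1)%R])
     (Num.max (Aint R F qH q1 q2 qL R1 R2 rB i) 0)%:E)%E.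
  set TB' := (\int[lebesgue_stieltjes_measure F]_(i in `[(- 2^-1)%R, (2^-1)%R])
     (Num.max (Aint R F qH q1 q2 qL R1 R2' rB i) 0)%:E)%E.
  set G := (\int[lebesgue_stieltjes_measure F]_(i in `[(- 2^-1)%R, (2^-1)%R])
     (Num.max (gf qH q1 q2 i) 0)%:E)%E.
  set Gm := (\int[lebesgue_stieltjes_measure F]_(i in `[(- 2^-1)%R, (2^-1)%R])
     (Num.max (- gf qH q1 q2 i) 0)%:E)%E.
  clearbody TB TB' G Gm.
  case: TB => [t||] //; case: TB' => [t'||] //; case: G => [g||] //;
    case: Gm => [gm||] // E1 _ _ _ _.
  rewrite lte_fin => pGm.
  move: E1; rewrite -EFinM -EFinM -EFinD -EFinD => -[E1].
  rewrite -EFinM -EFinM -EFinD -EFinD lte_fin.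
  have : 0 < k * gm by apply: mulr_gt0.
  move: E1; rewrite kE => E1.
  nra.
Qed.
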